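(* The normalized action-to-frequency map $$\check\Omega:\ell^{1,1}_{\ge 0}\to\mathfrak c_\uparrow,\qquad \gamma=(\gamma_n)_{n\ge1}\mapsto(\check\omega_n(\gamma))_{n\ge1},\qquad \check\omega_n(\gamma):=\sum_{k\ge1}k\gamma_k-\sum_{k>n}(k-n)\gamma_k,$$ is well defined and is a homeomorphism, where $\ell^{1,1}_{\ge0}$ carries the topology of the norm $\|x\|_{\ell^{1,1}}=\sum_{n\ge1}n|x_n|$ and $\mathfrak c_\uparrow$ carries the topology of the sup-norm $\|y\|=\sup_{n\ge1}|y_n|$.
   Context: $\ell^{1,1}_{\ge0}:=\{(x_n)_{n\ge1}: x_n\in\mathbb R,\ x_n\ge0\ \forall n\ge1,\ \sum_{n\ge1}n x_n<\infty\}$. $\mathfrak c$ denotes the real Banach space of convergent real sequences $y=(y_n)_{n\ge1}$ with the sup-norm; for $y\in\mathfrak c$ set $y_0:=0$. $\mathfrak c_\uparrow\subset\mathfrak c$ is the set of $y\in\mathfrak c$ with $0\le y_n\le y_{n+1}$ and $(y_n-y_{n-1})-(y_{n+1}-y_n)\ge0$ for all $n\ge1$. *)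

(* Defs.v *)
(* Real sequences (x_n)_{n>=1} are represented as  x : nat -> R  with the
   convention x 0 = 0 (index 0 is a dummy slot, matching the paper's y_0 := 0). *)
From Stdlib Require Import Reals.
From Coquelicot Require Import Coquelicot.
Open Scope R_scope.

Definition l11_nonneg (x : nat -> R) : Prop :=
  x 0%nat = 0 /\ (forall n, (1 <= n)%nat -> 0 <= x n) /\
  ex_series (fun n => INR n * x n).

Definition l11_norm (x : nat -> R) : R := Series (fun n => INR n * Rabs (x n)).

Definition conv_seq (y : nat -> R) : Prop :=
  y 0%nat = 0 /\ exists l : R, is_lim_seq (fun n => y (S n)) l.

Definition sup_norm (y : nat -> R) : R := real (Sup_seq (fun n => Rabs (y (S n)))).

Definition c_up (y : nat -> R) : Prop :=
  conv_seq y /\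
  forall n, (1 <= n)%nat ->
    0 <= y n /\ y n <= y (S n) /\
    (y n - y (n - 1)%nat) - (y (S n) - y n) >= 0.

Definition omega_check (g : nat -> R) (n : nat) : R :=
  match n with
  | O => 0
  | S _ => Series (fun k => INR k * g k)
           - Series (fun k => if (n <? k)%nat then (INR k - INR n) * g k else 0)
  end.

Definition seq_sub (x y : nat -> R) : nat -> R := fun n => x n - y n.

(* Main.v *)
Require Import Defs.
From Stdlib Require Import Reals Lra Lia FunctionalExtensionality.
From Coquelicot Require Import Coquelicot.
Open Scope R_scope.

Lemma exR_le (a b : nat -> R) : (forall n, Rabs (a n) <= b n) -> ex_series b -> ex_series a.
Proof. intros H Hb. apply (@ex_series_le R_AbsRing R_CompleteNormedModule a b); auto. Qed.

Lemma Series_zero : Series (fun _ => 0) = 0.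
Proof.
  rewrite (Series_ext (fun _ => 0) (fun n => 0 * 0)) by (intros; ring).
  rewrite Series_scal_l. ring.
Qed.

Lemma Series_nonneg (a : nat -> R) : (forall n, 0 <= a n) -> ex_series a -> 0 <= Series a.
Proof.
  intros H Ha. rewrite <- Series_zero. apply Series_le; auto. intros; split; auto; lra.
Qed.

Definition kg (g : nat -> R) := fun k => INR k * g k.
Definition Sg g n := sum_f_R0 (kg g) n.
Definition Tg g n := Series (fun k => g (S n + k)%nat).
Definition Tl g n := Series (fun k => kg g (S n + k)%nat).
Definition Fg g n := Sg g n + INR n * Tg g n.

Lemma ex_kg_shift g n : l11_nonneg g -> ex_series (fun k => kg g (S n + k)%nat).
Proof. intros [_ [_ H]]. now apply (ex_series_incr_n (kg g) (S n)). Qed.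

Lemma g_nonneg g k : l11_nonneg g -> 0 <= g k.
Proof. intros [H0 [Hp _]]. destruct k. lra. apply Hp; lia. Qed.

Lemma kg_nonneg g k : l11_nonneg g -> 0 <= kg g k.
Proof. intros Hg. unfold kg. apply Rmult_le_pos; [apply pos_INR|now apply g_nonneg]. Qed.

Lemma ex_g_shift g n : l11_nonneg g -> ex_series (fun k => g (S n + k)%nat).
Proof.
  intros Hg. apply (exR_le _ (fun k => kg g (S n + k)%nat)); [|now apply ex_kg_shift].
  intros k. unfold kg.
  assert (H0 : 0 <= g (S n + k)%nat) by (apply g_nonneg; auto).
  assert (H1 : 1 <= INR (S n + k)) by (apply (le_INR 1); lia).
  rewrite Rabs_right by lra. nra.
Qed.

Lemma Series_split g n : l11_nonneg g -> Series (kg g) = Sg g n + Tl g n.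
Proof.
  intros Hg. unfold Sg, Tl. rewrite (Series_incr_n (kg g) (S n)); [|lia|apply Hg]. reflexivity.
Qed.

Lemma Tg_nonneg g n : l11_nonneg g -> 0 <= Tg g n.
Proof. intros Hg. apply Series_nonneg. intros; now apply g_nonneg. now apply ex_g_shift. Qed.

Lemma Tl_nonneg g n : l11_nonneg g -> 0 <= Tl g n.
Proof. intros Hg. apply Series_nonneg. intros; now apply kg_nonneg. now apply ex_kg_shift. Qed.

Lemma Tg_step g n : l11_nonneg g -> Tg g n = g (S n) + Tg g (S n).
Proof.
  intros Hg. unfold Tg. rewrite Series_incr_1 by now apply ex_g_shift.
  f_equal; [f_equal; lia|]. apply Series_ext; intros k. f_equal; lia.
Qed.

Lemma nTg_le g n : l11_nonneg g -> INR n * Tg g n <= Tl g n.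
Proof.
  intros Hg. unfold Tg, Tl. rewrite <- Series_scal_l. apply Series_le; [|now apply ex_kg_shift].
  intros k. unfold kg. assert (0 <= g (S n + k)%nat) by (apply g_nonneg; auto).
  assert (INR n <= INR (S n + k)) by (apply le_INR; lia).
  split. apply Rmult_le_pos; auto; apply pos_INR. nra.
Qed.

Lemma omega_F g n : l11_nonneg g -> omega_check g n = Fg g n.
Proof.
  intros Hg. destruct n as [|m].
  - unfold Fg, Sg, kg. simpl. ring.
  - unfold omega_check. set (n := S m).
    rewrite (Series_incr_n_aux (fun k => if (n <? k)%nat then (INR k - INR n) * g k else 0) (S n)).
    2:{ intros k Hk. destruct (Nat.ltb_spec n k); [lia|reflexivity]. }
    rewrite (Series_ext (fun k => if (n <? (S n + k))%nat then (INR (S n + k) - INR n) * g (S n + k)%nat else 0) (fun k => kg g (S n + k)%nat - INR n * g (S n + k)%nat)).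
    2:{ intros k. destruct (Nat.ltb_spec n (S n + k)); [|lia]. unfold kg. ring. }
    rewrite Series_minus; [|now apply ex_kg_shift|].
    2:{ apply (ex_series_scal_l (V:=R_NormedModule)). now apply ex_g_shift. }
    rewrite Series_scal_l. fold (Tl g n). fold (Tg g n).
    change (fun k : nat => INR k * g k) with (kg g). rewrite (Series_split g n Hg). unfold Fg. ring.
Qed.

Lemma F_step g n : l11_nonneg g -> Fg g (S n) - Fg g n = Tg g n.
Proof.
  intros Hg. unfold Fg, Sg. rewrite tech5, (Tg_step g n Hg), S_INR. unfold kg. rewrite S_INR. ring.
Qed.

Lemma Sg_nonneg g n : l11_nonneg g -> 0 <= Sg g n.
Proof. intros Hg. apply cond_pos_sum. intros; now apply kg_nonneg. Qed.

Lemma F_le_Series g n : l11_nonneg g -> Fg g n <= Series (kg g).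
Proof. intros Hg. rewrite (Series_split g n Hg). unfold Fg. pose proof (nTg_le g n Hg). lra. Qed.

Lemma F_0 g : Fg g 0 = 0.
Proof. unfold Fg, Sg, kg. simpl. ring. Qed.

Lemma omega_eqF g : l11_nonneg g -> omega_check g = Fg g.
Proof. intros Hg. extensionality n. now apply omega_F. Qed.

Lemma F_lim g : l11_nonneg g -> exists l : R, is_lim_seq (fun n => Fg g (S n)) l.
Proof.
  intros Hg. apply (ex_finite_lim_seq_incr _ (Series (kg g))).
  - intros n. pose proof (F_step g (S n) Hg). pose proof (Tg_nonneg g (S n) Hg). lra.
  - intros n. now apply F_le_Series.
Qed.

Lemma part1 g : l11_nonneg g -> c_up (omega_check g).
Proof.
  intros Hg. rewrite (omega_eqF g Hg). split.
  - split. apply F_0. now apply F_lim.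
  - intros n Hn. split; [|split].
    + unfold Fg. pose proof (Sg_nonneg g n Hg). pose proof (Tg_nonneg g n Hg).
      pose proof (pos_INR n). nra.
    + pose proof (F_step g n Hg). pose proof (Tg_nonneg g n Hg). lra.
    + destruct n as [|m]; [lia|]. replace (S m - 1)%nat with m by lia.
      rewrite (F_step g m Hg), (F_step g (S m) Hg), (Tg_step g m Hg).
      pose proof (g_nonneg g (S m) Hg). lra.
Qed.

Lemma g_from_F g n : l11_nonneg g -> (1 <= n)%nat ->
  g n = (Fg g n - Fg g (n - 1)%nat) - (Fg g (S n) - Fg g n).
Proof.
  intros Hg Hn. destruct n as [|m]; [lia|]. replace (S m - 1)%nat with m by lia.
  rewrite (F_step g m Hg), (F_step g (S m) Hg), (Tg_step g m Hg). ring.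
Qed.

Lemma part2 g g' : l11_nonneg g -> l11_nonneg g' -> omega_check g = omega_check g' -> g = g'.
Proof.
  intros Hg Hg' E. rewrite (omega_eqF g Hg), (omega_eqF g' Hg') in E.
  extensionality n. destruct n as [|m].
  - destruct Hg as [-> _]; destruct Hg' as [-> _]; reflexivity.
  - rewrite (g_from_F g (S m) Hg), (g_from_F g' (S m) Hg') by lia. now rewrite E.
Qed.

Section Surj.
Variable y : nat -> R.
Hypothesis Hy : c_up y.

Definition dd n := y n - y (n - 1)%nat.
Definition gy n := match n with O => 0 | S _ => dd n - dd (S n) end.

Lemma y_mono n : y n <= y (S n).
Proof.
  destruct Hy as [[H0 _] H]. destruct n as [|m].
  - rewrite H0. destruct (H 1%nat (le_n 1)) as [A _]. exact A.
  - destruct (H (S m)) as [_ [A _]]; [lia|exact A].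
Qed.

Lemma y_mono_le n m : y n <= y (n + m)%nat.
Proof.
  induction m. rewrite Nat.add_0_r; lra.
  rewrite Nat.add_succ_r. pose proof (y_mono (n+m)). lra.
Qed.

Lemma dd_nonneg n : 0 <= dd (S n).
Proof. unfold dd. simpl (S n - 1)%nat. rewrite Nat.sub_0_r. pose proof (y_mono n). lra. Qed.

Lemma dd_dec n : dd (S (S n)) <= dd (S n).
Proof.
  destruct Hy as [_ H]. destruct (H (S n)) as [_ [_ A]]; [lia|].
  unfold dd. simpl (S n - 1)%nat. simpl (S (S n) - 1)%nat. rewrite !Nat.sub_0_r in *. simpl in A. rewrite Nat.sub_0_r in A. lra.
Qed.

Lemma gy_nonneg n : 0 <= gy n.
Proof. destruct n; simpl gy. lra. pose proof (dd_dec n). lra. Qed.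

Lemma y_lim : exists l : R, is_lim_seq y l.
Proof.
  destruct Hy as [[_ [l Hl]] _]. exists l. now apply is_lim_seq_incr_1.
Qed.

Lemma y_bound (l : R) : is_lim_seq y l -> forall n, y n <= l.
Proof.
  intros Hl n. apply (is_lim_seq_incr_n _ n) in Hl.
  assert (Hc := is_lim_seq_const (y n)).
  assert (Hle := is_lim_seq_le (fun _ => y n) (fun m => y (m + n)%nat) (y n) l).
  simpl in Hle. apply Hle; auto. intros m. rewrite Nat.add_comm. apply y_mono_le.
Qed.

Lemma dd_lim : is_lim_seq (fun n => dd (S n)) 0.
Proof.
  destruct y_lim as [l Hl].
  assert (H1 : is_lim_seq (fun n => y (S n)) l) by (apply (proj1 (is_lim_seq_incr_1 y l)); exact Hl).
  assert (H := is_lim_seq_minus' _ _ _ _ H1 Hl).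
  replace (l - l) with 0 in H by ring.
  eapply is_lim_seq_ext; [|exact H]. intros n. unfold dd. simpl. rewrite Nat.sub_0_r. reflexivity.
Qed.

Lemma Sgy n : Sg gy n = y n - INR n * dd (S n).
Proof.
  induction n.
  - unfold Sg, kg. simpl. destruct Hy as [[H0 _] _]. rewrite H0. ring.
  - unfold Sg in *. rewrite tech5, IHn. unfold kg. simpl gy.
    rewrite S_INR. unfold dd. simpl. rewrite !Nat.sub_0_r. ring.
Qed.

Lemma gy_l11 : l11_nonneg gy.
Proof.
  split; [reflexivity|split; [intros; apply gy_nonneg|]].
  destruct y_lim as [l Hl].
  assert (Hf : ex_finite_lim_seq (sum_n (kg gy))).
  { apply (ex_finite_lim_seq_incr _ l).
    - intros n. rewrite !sum_n_Reals, tech5. 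
      assert (0 <= kg gy (S n)) by (unfold kg; apply Rmult_le_pos; [apply pos_INR|apply gy_nonneg]).
      lra.
    - intros n. rewrite sum_n_Reals. fold (Sg gy n). rewrite Sgy.
      pose proof (y_bound l Hl n). pose proof (dd_nonneg n). pose proof (pos_INR n). nra. }
  destruct Hf as [s Hs]. exists s. exact Hs.
Qed.

Lemma Tgy n : Tg gy n = dd (S n).
Proof.
  unfold Tg. apply is_series_unique.
  assert (Hp : forall m, sum_n (fun k => gy (S n + k)%nat) m = dd (S n) - dd (S (S n + m))).
  { intros m. rewrite sum_n_Reals. induction m.
    - simpl. rewrite !Nat.add_0_r. ring.
    - rewrite tech5, IHm. replace (S n + S m)%nat with (S (S (n + m))) by lia. replace (S n + m)%nat with (S (n + m)) by lia. simpl gy. change (AbelianMonoid.sort R_AbelianMonoid) with R. ring. }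
  assert (Hl : is_lim_seq (fun m => dd (S n) - dd (S (S n + m))) (dd (S n) - 0)).
  { apply is_lim_seq_minus'. apply is_lim_seq_const.
    assert (H := dd_lim). apply (is_lim_seq_incr_n _ (S n)) in H.
    eapply is_lim_seq_ext; [|exact H]. intros m. simpl. f_equal. f_equal. lia. }
  rewrite Rminus_0_r in Hl.
  apply (is_lim_seq_ext _ (sum_n (fun k => gy (S n + k)%nat))) in Hl.
  exact Hl. intros m. now rewrite Hp.
Qed.

Lemma part3 : exists g, l11_nonneg g /\ omega_check g = y.
Proof.
  exists gy. split. apply gy_l11. rewrite (omega_eqF gy gy_l11).
  extensionality n. unfold Fg. rewrite Sgy, Tgy. ring.
Qed.
End Surj.

Lemma sup_facts (u : nat -> R) B : (forall n, 0 <= u n <= B) ->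
  real (Sup_seq (fun n => Finite (u n))) <= B /\
  forall n, u n <= real (Sup_seq (fun n => Finite (u n))).
Proof.
  intros Hu. assert (Hc := Sup_seq_correct (fun n => Finite (u n))).
  destruct (Sup_seq (fun n => Finite (u n))) as [s| |]; simpl in *.
  - split.
    + apply Rnot_lt_le. intros Hlt.
      destruct (Hc (mkposreal (s - B) ltac:(lra))) as [_ [n Hn]]. simpl in Hn.
      specialize (Hu n). lra.
    + intros n. apply Rnot_lt_le. intros Hlt.
      destruct (Hc (mkposreal (u n - s) ltac:(lra))) as [Hn _]. specialize (Hn n). simpl in Hn. lra.
  - destruct (Hc B) as [n Hn]. specialize (Hu n). simpl in Hn. lra.
  - specialize (Hc (u 0%nat) 0%nat). simpl in Hc. lra.
Qed.

Section Cont.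
Variables g g' : nat -> R.
Hypothesis Hg : l11_nonneg g.
Hypothesis Hg' : l11_nonneg g'.

Definition hh := seq_sub g' g.
Definition ah k := INR k * Rabs (hh k).

Lemma ah_le k : ah k <= kg g' k + kg g k.
Proof.
  unfold ah, kg, hh, seq_sub. pose proof (g_nonneg g k Hg). pose proof (g_nonneg g' k Hg').
  pose proof (pos_INR k). assert (Rabs (g' k - g k) <= g' k + g k) by (apply Rabs_le; lra). nra.
Qed.

Lemma ah_nonneg k : 0 <= ah k.
Proof. unfold ah. apply Rmult_le_pos. apply pos_INR. apply Rabs_pos. Qed.

Lemma ex_ah : ex_series ah.
Proof.
  apply (exR_le _ (fun k => kg g' k + kg g k)).
  - intros k. rewrite Rabs_pos_eq by apply ah_nonneg. apply ah_le.
  - apply (ex_series_plus (V:=R_NormedModule)); [apply Hg'|apply Hg].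
Qed.

Lemma norm_ah : l11_norm hh = Series ah.
Proof. reflexivity. Qed.

Lemma ah_split n : Series ah = sum_f_R0 ah n + Series (fun k => ah (S n + k)%nat).
Proof. rewrite (Series_incr_n ah (S n)); [reflexivity|lia|apply ex_ah]. Qed.

Lemma ex_ah_shift n : ex_series (fun k => ah (S n + k)%nat).
Proof. apply (ex_series_incr_n ah (S n)). apply ex_ah. Qed.

Lemma F_diff n : Rabs (Fg g' n - Fg g n) <= l11_norm hh.
Proof.
  rewrite norm_ah, (ah_split n).
  assert (E : Fg g' n - Fg g n = sum_f_R0 (fun k => INR k * hh k) n
                 + INR n * Series (fun k => hh (S n + k)%nat)).
  { unfold Fg, Sg, Tg, hh, seq_sub. rewrite Series_minus by (apply ex_g_shift; auto).
    unfold kg.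
    rewrite (sum_eq (fun k => INR k * (g' k - g k)) (fun i => INR i * g' i - INR i * g i)) by (intros; ring).
    rewrite minus_sum. ring. }
  rewrite E. eapply Rle_trans; [apply Rabs_triang|]. apply Rplus_le_compat.
  - eapply Rle_trans; [apply sum_f_R0_triangle|]. apply sum_Rle. intros k _.
    unfold ah. rewrite Rabs_mult, Rabs_pos_eq by apply pos_INR. lra.
  - rewrite <- Series_scal_l.
    assert (Hex : ex_series (fun k => Rabs (INR n * hh (S n + k)%nat))).
    { apply (exR_le _ (fun k => ah (S n + k)%nat)); [|apply ex_ah_shift].
      intros k. rewrite Rabs_Rabsolu. unfold ah. rewrite Rabs_mult, Rabs_pos_eq by apply pos_INR.
      apply Rmult_le_compat_r. apply Rabs_pos. apply le_INR; lia. }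
    eapply Rle_trans; [apply Series_Rabs; exact Hex|].
    apply Series_le; [|apply ex_ah_shift]. intros k. split. apply Rabs_pos.
    unfold ah. rewrite Rabs_mult, Rabs_pos_eq by apply pos_INR.
    apply Rmult_le_compat_r. apply Rabs_pos. apply le_INR; lia.
Qed.

Definition sn := sup_norm (seq_sub (omega_check g') (omega_check g)).

Lemma sn_facts : sn <= l11_norm hh /\ forall n, Rabs (Fg g' n - Fg g n) <= sn.
Proof.
  unfold sn, sup_norm, seq_sub. rewrite (omega_eqF g Hg), (omega_eqF g' Hg').
  destruct (sup_facts (fun n => Rabs (Fg g' (S n) - Fg g (S n))) (l11_norm hh)) as [A B].
  { intros n. split. apply Rabs_pos. apply F_diff. }
  split. exact A. intros [|n].
  - rewrite !F_0. replace (0 - 0) with 0 by ring. rewrite Rabs_R0.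
    eapply Rle_trans; [apply Rabs_pos|]. apply (B 0%nat).
  - apply B.
Qed.
End Cont.

Lemma Tl_lim g : l11_nonneg g -> is_lim_seq (Tl g) 0.
Proof.
  intros Hg. assert (Hs : is_lim_seq (Sg g) (Series (kg g))).
  { assert (H := Series_correct _ (proj2 (proj2 Hg))).
    eapply is_lim_seq_ext; [|exact H]. intros n. unfold Sg. now rewrite sum_n_Reals. }
  assert (H := is_lim_seq_minus' _ _ _ _ (is_lim_seq_const (Series (kg g))) Hs).
  replace (Series (kg g) - Series (kg g)) with 0 in H by ring.
  eapply is_lim_seq_ext; [|exact H]. intros n. simpl. rewrite (Series_split g n Hg). ring.
Qed.

Section Inv.
Variables g g' : nat -> R.
Hypothesis Hg : l11_nonneg g.
Hypothesis Hg' : l11_nonneg g'.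

Lemma Fclose n : Rabs (Fg g' n - Fg g n) <= sn g g'.
Proof. apply (proj2 (sn_facts g g' Hg Hg')). Qed.

Lemma sn_nonneg : 0 <= sn g g'.
Proof. eapply Rle_trans; [apply Rabs_pos|apply (Fclose 0)]. Qed.

Lemma L_le : Series (kg g') <= Series (kg g) + sn g g'.
Proof.
  assert (Hb : forall M, Series (kg g') <= Series (kg g) + sn g g' + Tl g' M).
  { intros M. rewrite (Series_split g' M Hg').
    pose proof (F_le_Series g M Hg). pose proof (Fclose M). apply Rabs_le_between in H0.
    unfold Fg in *. pose proof (pos_INR M). pose proof (Tg_nonneg g' M Hg'). nra. }
  assert (Hl : is_lim_seq (fun M => Series (kg g) + sn g g' + Tl g' M) (Series (kg g) + sn g g' + 0)).
  { apply is_lim_seq_plus'. apply is_lim_seq_const. now apply Tl_lim. }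
  assert (H := is_lim_seq_le _ _ _ _ Hb (is_lim_seq_const _) Hl). simpl in H. lra.
Qed.

Lemma Tl'_le N : Tl g' N <= Tl g N + (2 * INR N + 2) * sn g g'.
Proof.
  pose proof (Series_split g' N Hg') as E'. pose proof (Series_split g N Hg) as E.
  pose proof L_le as HL.
  pose proof (F_step g' N Hg') as S'. pose proof (F_step g N Hg) as S0.
  pose proof (Fclose N) as C1. pose proof (Fclose (S N)) as C2.
  apply Rabs_le_between in C1. apply Rabs_le_between in C2.
  assert (Eq' : Sg g' N = Fg g' N - INR N * (Fg g' (S N) - Fg g' N)) by (rewrite S'; unfold Fg; ring).
  assert (Eq : Sg g N = Fg g N - INR N * (Fg g (S N) - Fg g N)) by (rewrite S0; unfold Fg; ring).
  assert (HN : INR N * (Fg g' (S N) - Fg g' N) <= INR N * (Fg g (S N) - Fg g N + 2 * sn g g')).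
  { apply Rmult_le_compat_l. apply pos_INR. lra. }
  lra.
Qed.

Lemma h_bound k : Rabs (hh g g' k) <= 4 * sn g g'.
Proof.
  pose proof sn_nonneg. unfold hh, seq_sub. destruct k as [|m].
  - destruct Hg as [-> _]; destruct Hg' as [-> _]. rewrite Rminus_0_r, Rabs_R0. lra.
  - rewrite (g_from_F g (S m) Hg), (g_from_F g' (S m) Hg') by lia.
    pose proof (Fclose (S m)). pose proof (Fclose (S m - 1)). pose proof (Fclose (S (S m))).
    apply Rabs_le_between in H0. apply Rabs_le_between in H1. apply Rabs_le_between in H2.
    apply Rabs_le; lra.
Qed.

Lemma norm_bound N : l11_norm (hh g g') <= INR N * (4 * sn g g') * INR (S N) + Tl g' N + Tl g N.
Proof.
  rewrite norm_ah, (ah_split g g' Hg Hg' N).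
  assert (A : sum_f_R0 (ah g g') N <= INR N * (4 * sn g g') * INR (S N)).
  { rewrite <- sum_cte. apply sum_Rle. intros k Hk. unfold ah.
    apply Rmult_le_compat. apply pos_INR. apply Rabs_pos. apply le_INR; lia. apply h_bound. }
  assert (B : Series (fun k => ah g g' (S N + k)%nat) <= Tl g' N + Tl g N).
  { unfold Tl. rewrite <- Series_plus by (apply ex_kg_shift; auto).
    apply Series_le. intros k. split. apply ah_nonneg. apply ah_le; auto.
    apply (ex_series_plus (V:=R_NormedModule)); apply ex_kg_shift; auto. }
  lra.
Qed.
End Inv.

Lemma part5 g : l11_nonneg g -> forall eps, 0 < eps -> exists delta, 0 < delta /\
     forall g', l11_nonneg g' ->
       sup_norm (seq_sub (omega_check g') (omega_check g)) < delta ->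
       l11_norm (seq_sub g' g) < eps.
Proof.
  intros Hg eps Heps.
  assert (Hl := Tl_lim g Hg). apply is_lim_seq_spec in Hl.
  destruct (Hl (mkposreal (eps/4) ltac:(lra))) as [N HN]. specialize (HN N (le_n N)).
  simpl in HN. rewrite Rminus_0_r in HN. apply Rabs_lt_between in HN.
  set (C := 4 * INR N * INR (S N) + 2 * INR N + 2).
  assert (HC : 0 < C) by (unfold C; pose proof (pos_INR N); pose proof (pos_INR (S N)); nra).
  exists (eps / (2 * C)). split. apply Rdiv_lt_0_compat; lra.
  intros g' Hg' Hs. fold (sn g g') in Hs.
  pose proof (norm_bound g g' Hg Hg' N) as NB. pose proof (Tl'_le g g' Hg Hg' N) as TB.
  fold (hh g g').
  assert (Cs : C * sn g g' < eps / 2).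
  { apply (Rmult_lt_compat_l C) in Hs; auto. replace (C * (eps / (2 * C))) with (eps/2) in Hs by (field; lra). exact Hs. }
  unfold C in Cs. lra.
Qed.

Lemma part4 g : l11_nonneg g -> forall eps, 0 < eps -> exists delta, 0 < delta /\
     forall g', l11_nonneg g' -> l11_norm (seq_sub g' g) < delta ->
       sup_norm (seq_sub (omega_check g') (omega_check g)) < eps.
Proof.
  intros Hg eps Heps. exists eps. split; auto. intros g' Hg' H.
  fold (sn g g'). pose proof (proj1 (sn_facts g g' Hg Hg')). fold (hh g g') in H. lra.
Qed.

Theorem proposition2p1 :
  (* well defined: maps l11_nonneg into c_up *)
  (forall g, l11_nonneg g -> c_up (omega_check g)) /\
  (* injective on l11_nonneg *)
  (forall g g', l11_nonneg g -> l11_nonneg g' ->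
     omega_check g = omega_check g' -> g = g') /\
  (* surjective onto c_up *)
  (forall y, c_up y -> exists g, l11_nonneg g /\ omega_check g = y) /\
  (* continuous (l^{1,1}-norm -> sup-norm) *)
  (forall g, l11_nonneg g -> forall eps, 0 < eps -> exists delta, 0 < delta /\
     forall g', l11_nonneg g' -> l11_norm (seq_sub g' g) < delta ->
       sup_norm (seq_sub (omega_check g') (omega_check g)) < eps) /\
  (* inverse continuous (sup-norm -> l^{1,1}-norm) *)
  (forall g, l11_nonneg g -> forall eps, 0 < eps -> exists delta, 0 < delta /\
     forall g', l11_nonneg g' ->
       sup_norm (seq_sub (omega_check g') (omega_check g)) < delta ->
       l11_norm (seq_sub g' g) < eps).
Proof.
  split; [exact part1|]. split; [exact part2|]. split; [exact part3|].
  split; [exact part4|exact part5].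
Qed.
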